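(* Let $\Omega\subset\mathbb{R}^d$ be a bounded domain, let $c_\varepsilon:\Omega\times\Omega\to\mathbb{R}$ be a bounded measurable cost function with $\|c_\varepsilon\|_\infty=\sup_{\Omega\times\Omega}|c_\varepsilon|<\infty$, let $\mu_\star,\nu_\star$ be probability measures on $\Omega$, and for each $k\ge 0$ let $\mu_{\star,k},\nu_{\star,k}$ be probability measures on $\Omega$. Define the centered Sinkhorn iterates by $\bar\varphi_0:=0$ and, for $k\ge 0$, $$\bar\psi_k(\mathbf{y}):=-\log\int_\Omega e^{\bar\varphi_k(\mathbf{x})-c_\varepsilon(\mathbf{x},\mathbf{y})}\,\mu_{\star,k}(\mathrm{d}\mathbf{x}),$$ $$\bar\varphi_{k+1}(\mathbf{x}):=-\log\int_\Omega e^{\bar\psi_k(\mathbf{y})-c_\varepsilon(\mathbf{x},\mathbf{y})}\,\nu_{\star,k}(\mathrm{d}\mathbf{y})+\lambda_k,\qquad \lambda_k:=\int_\Omega\log\Big(\int_\Omega e^{\bar\psi_k(\mathbf{y})-c_\varepsilon(\mathbf{x},\mathbf{y})}\,\nu_{\star,k}(\mathrm{d}\mathbf{y})\Big)\mu_\star(\mathrm{d}\mathbf{x}).$$ Then for every $k\ge 0$, $$\|\bar\varphi_k\|_\infty\le 2\|c_\varepsilon\|_\infty,\qquad \|\bar\psi_k\|_\infty\le 3\|c_\varepsilon\|_\infty.$$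
   Context: The constant $\lambda_k$ is a centering constant ensuring $\int_\Omega\bar\varphi_{k+1}\,\mathrm{d}\mu_\star=0$. The measures $\mu_{\star,k},\nu_{\star,k}$ play the role of approximations of the marginals $\mu_\star,\nu_\star$ available at iteration $k$. *)

(* Defs.v *)
From HB Require Import structures.
From mathcomp Require Import all_boot all_order all_algebra.
From mathcomp Require Import all_classical all_reals all_analysis.
Set Implicit Arguments. Unset Strict Implicit. Unset Printing Implicit Defensive.
Import Order.TTheory GRing.Theory Num.Theory.
Import numFieldNormedType.Exports.
Local Open Scope classical_set_scope.
Local Open Scope ring_scope.

(* R^d is modelled measure-theoretically as d.-tuple R (with the product
   sigma-algebra of the library = Borel sets) and topologically through
   the identification with the normed space 'rV[R]_d. *)
Definition tuple_to_rV {R : realType} {d : nat} (x : d.-tuple R) : 'rV[R]_d :=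
  \row_i tnth x i.

Definition bounded_domain {R : realType} {d : nat} (Om : set (d.-tuple R)) : Prop :=
  let O := tuple_to_rV @` Om in
  O !=set0 /\ open O /\ connected O /\ bounded_set O.

Definition supnorm {R : realType} {T : Type} (A : set T) (f : T -> R) : \bar R :=
  ereal_sup [set (`|f x|)%:E | x in A].

Section Sinkhorn.
Context {R : realType} {dT : measure_display} {T : measurableType dT}.
Variables (Om : set T) (c : T -> T -> R).

Definition psi_of (mu : {measure set T -> \bar R}) (phi : T -> R) : T -> R :=
  fun y => - ln (fine (\int[mu]_(x in Om) (expR (phi x - c x y))%:E)%E).

Definition J_of (nu : {measure set T -> \bar R}) (psi : T -> R) : T -> R :=
  fun x => fine (\int[nu]_(y in Om) (expR (psi y - c x y))%:E)%E.

Definition lambda_of (mustar nu : {measure set T -> \bar R}) (psi : T -> R) : R :=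
  fine (\int[mustar]_(x in Om) (ln (J_of nu psi x))%:E)%E.

Definition phi_next (mustar nu : {measure set T -> \bar R}) (psi : T -> R) : T -> R :=
  fun x => - ln (J_of nu psi x) + lambda_of mustar nu psi.

Fixpoint phibar (mustar : {measure set T -> \bar R})
    (muk nuk : nat -> {measure set T -> \bar R}) (k : nat) : T -> R :=
  match k with
  | 0 => fun _ => 0
  | k'.+1 => phi_next mustar (nuk k') (psi_of (muk k') (phibar mustar muk nuk k'))
  end.

Definition psibar (mustar : {measure set T -> \bar R})
    (muk nuk : nat -> {measure set T -> \bar R}) (k : nat) : T -> R :=
  psi_of (muk k) (phibar mustar muk nuk k).

End Sinkhorn.

(* Main.v *)
Require Import Defs.
From HB Require Import structures.
From mathcomp Require Import all_boot all_order all_algebra.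
From mathcomp Require Import all_classical all_reals all_analysis.
From mathcomp Require Import lra.
Import Order.TTheory GRing.Theory Num.Theory.
Import numFieldNormedType.Exports.
Local Open Scope classical_set_scope.
Local Open Scope ring_scope.

Section Helpers.
Local Open Scope ereal_scope.
Context d (T : measurableType d) (R : realType).
Variable mu : {measure set T -> \bar R}.
Variables (D : set T) (mD : measurable D).
Import HBNNSimple.

Lemma patch_le0 (f g : T -> \bar R) x :
  (forall x, D x -> f x <= g x) -> (f \_ D) x <= (g \_ D) x.
Proof. by move=> fg; rewrite /patch; case: ifP => // /[!inE] /fg. Qed.

Lemma le_int_nm (f g : T -> \bar R) : (forall x, D x -> 0 <= f x) ->
  (forall x, D x -> f x <= g x) ->
  \int[mu]_(x in D) f x <= \int[mu]_(x in D) g x.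
Proof.
move=> f0 fg.
rewrite ge0_integralE // [X in _ <= X]ge0_integralE; last first.
  by move=> x Dx; apply: le_trans (f0 x Dx) (fg x Dx).
apply: ge_ereal_sup => _ [h hf <-]; apply: ereal_sup_ubound.
exists h => // x; apply: le_trans (hf x) _; exact: patch_le0.
Qed.

Lemma int_scale (k : R) (f : T -> \bar R) : (0 < k)%R ->
  (forall x, D x -> 0 <= f x) ->
  \int[mu]_(x in D) (k%:E * f x) <= k%:E * \int[mu]_(x in D) f x.
Proof.
move=> k0 f0.
rewrite ge0_integralE; last by move=> x Dx; apply: mule_ge0; [rewrite lee_fin ltW|exact: f0].
rewrite [X in _ <= _ * X]ge0_integralE //.
apply: ge_ereal_sup => _ [h hf <-].
have k10 : (0 <= k^-1)%R by rewrite invr_ge0 ltW.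
have -> : sintegral mu h = k%:E * sintegral mu (scale_nnsfun h k10).
  rewrite -sintegralrM; apply: eq_sintegral => x /=.
  by rewrite mulrA mulfV ?mul1r // gt_eqF.
rewrite lee_pmul2l ?lte_fin //.
apply: ereal_sup_ubound; exists (scale_nnsfun h k10) => // x /=.
have := hf x; rewrite /patch; case: ifP => _.
  case: (f x) => [r| |]; rewrite ?leey //.
    rewrite !lee_fin => hr.
    by rewrite -(ler_pM2l k0) mulrA mulfV ?gt_eqF // mul1r.
  by rewrite gt0_muleNy ?lte_fin // leeNy_eq.
change (point : \bar R) with (0 : \bar R).
by rewrite !lee_fin => h0; rewrite mulr_ge0_le0.
Qed.

Lemma fin_max (a b P Q : R) : (Num.max a 0 <= P)%R -> (P <= Num.max b 0)%R ->
  (Num.max (- b) 0 <= Q)%R -> (Q <= Num.max (- a) 0)%R -> (a <= P - Q <= b)%R.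
Proof.
rewrite !ge_max !le_max => /andP[h1 h2] /orP h3 /andP[h4 h5] /orP h6.
by apply/andP; split; case: h3 => h3; case: h6 => h6; lra.
Qed.

Lemma int_cst1 (r : R) : mu D = 1 -> \int[mu]_(x in D) r%:E = r%:E.
Proof. by move=> mu1; rewrite (integral_cst mu mD r%:E) mu1 mule1. Qed.

Lemma int_bounds (f : T -> R) (a b : R) : mu D = 1 ->
  (forall x, D x -> (a <= f x <= b)%R) ->
  (a <= fine (\int[mu]_(x in D) (f x)%:E) <= b)%R.
Proof.
move=> mu1 hf.
rewrite integralE.
have ep x : ((fun y => (f y)%:E)^\+) x = (Num.max (f x) 0)%:E.
  by rewrite funeposE EFin_max.
have en x : ((fun y => (f y)%:E)^\-) x = (Num.max (- f x) 0)%:E.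
  by rewrite funenegE EFin_max.
under eq_integral do rewrite ep.
under [X in _ - X]eq_integral do rewrite en.
set P := \int[mu]_(x in D) _.
set Q := \int[mu]_(x in D) _.
have P1 : (Num.max a 0)%:E <= P.
  rewrite -(int_cst1 _ mu1); apply: le_int_nm => [x _|x /hf /andP[h _]].
    by rewrite lee_fin le_max lexx orbT.
  by rewrite lee_fin le_max2.
have P2 : P <= (Num.max b 0)%:E.
  rewrite -(int_cst1 _ mu1); apply: le_int_nm => [x _|x /hf /andP[_ h]].
    by rewrite lee_fin le_max lexx orbT.
  by rewrite lee_fin le_max2.
have Q1 : (Num.max (- b) 0)%:E <= Q.
  rewrite -(int_cst1 _ mu1); apply: le_int_nm => [x _|x /hf /andP[_ h]].
    by rewrite lee_fin le_max lexx orbT.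
  by rewrite lee_fin le_max2 // lerN2.
have Q2 : Q <= (Num.max (- a) 0)%:E.
  rewrite -(int_cst1 _ mu1); apply: le_int_nm => [x _|x /hf /andP[h _]].
    by rewrite lee_fin le_max lexx orbT.
  by rewrite lee_fin le_max2 // lerN2.
have Pf : P \is a fin_num by rewrite fin_numElt (lt_le_trans _ P1) ?ltNyr // (le_lt_trans P2) ?ltry.
have Qf : Q \is a fin_num by rewrite fin_numElt (lt_le_trans _ Q1) ?ltNyr // (le_lt_trans Q2) ?ltry.
rewrite -(fineK Pf) -(fineK Qf) in P1 P2 Q1 Q2 *.
rewrite -EFinB /=.
by apply: fin_max; rewrite -lee_fin.
Qed.
End Helpers.

Section Main.
Context {R : realType} {dT : measure_display} {T : measurableType dT}.
Variables (Om : set T) (c : T -> T -> R) (C : R).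
Hypothesis mOm : measurable Om.
Hypothesis C0 : 0 <= C.
Hypothesis hc : forall x y, Om x -> Om y -> `|c x y| <= C.

Lemma ln_bound (M t : R) : expR (- M) <= t <= expR M -> -M <= ln t <= M.
Proof.
move=> /andP[h1 h2].
have t0 : 0 < t by apply: lt_le_trans h1; exact: expR_gt0.
apply/andP; split.
  by rewrite -[X in X <= _](expRK (- M)) ler_ln // posrE expR_gt0.
by rewrite -[X in _ <= X](expRK M) ler_ln // posrE expR_gt0.
Qed.

Lemma ln_shift (a s t : R) : 0 < s -> 0 < t -> s <= expR a * t -> ln s <= a + ln t.
Proof.
move=> s0 t0 h.
rewrite -[X in _ <= X + _](expRK a) -lnM ?posrE ?expR_gt0 //.
by rewrite ler_ln // posrE mulr_gt0 // expR_gt0.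
Qed.

Lemma fin_int_bounds (mu : {measure set T -> \bar R}) (g : T -> R) (a b : R) :
  mu Om = 1%E -> 0 <= a -> (forall x, Om x -> a <= g x <= b) ->
  (a%:E <= \int[mu]_(x in Om) (g x)%:E <= b%:E)%E.
Proof.
move=> mu1 a0 hg; apply/andP; split.
  rewrite -(@int_cst1 _ _ _ mu Om mOm _ mu1); apply: le_int_nm => // x /hg /andP[h _].
  by rewrite lee_fin.
rewrite -(@int_cst1 _ _ _ mu Om mOm _ mu1); apply: le_int_nm => // x /hg /andP[h h'].
  by rewrite lee_fin (le_trans a0).
by rewrite lee_fin.
Qed.

Lemma psi_bound (mu : {measure set T -> \bar R}) (phi : T -> R) :
  mu Om = 1%E -> (forall x, Om x -> `|phi x| <= 2 * C) ->
  forall y, Om y -> `|psi_of Om c mu phi y| <= 3 * C.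
Proof.
move=> mu1 hphi y Oy; rewrite /psi_of normrN.
have h : expR (- (3 * C)) <=
    fine (\int[mu]_(x in Om) (expR (phi x - c x y))%:E) <= expR (3 * C).
  apply: (@int_bounds _ _ _ mu Om mOm) => // x Ox; rewrite !ler_expR.
  have := hphi x Ox; have := hc x y Ox Oy.
  rewrite !ler_norml => /andP[? ?] /andP[? ?]; apply/andP; split; lra.
by rewrite ler_norml; exact: ln_bound h.
Qed.

Lemma phi_bound (mustar nu : {measure set T -> \bar R}) (psi : T -> R) :
  mustar Om = 1%E -> nu Om = 1%E -> (forall y, Om y -> `|psi y| <= 3 * C) ->
  forall x, Om x -> `|phi_next Om c mustar nu psi x| <= 2 * C.
Proof.
move=> ms1 nu1 hpsi.
pose F x := (\int[nu]_(y in Om) (expR (psi y - c x y))%:E)%E.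
have Fb x : Om x -> ((expR (- (4 * C)))%:E <= F x <= (expR (4 * C))%:E)%E.
  move=> Ox; rewrite /F.
  have H := @fin_int_bounds nu (fun y => expR (psi y - c x y)) (expR (-(4*C))) (expR (4*C)) nu1 (expR_ge0 _).
  apply: H.
  move=> y Oy; rewrite !ler_expR.
  have := hpsi y Oy; have := hc x y Ox Oy.
  rewrite !ler_norml => /andP[? ?] /andP[? ?]; apply/andP; split; lra.
have Ffin x : Om x -> F x \is a fin_num.
  move=> /Fb /andP[h1 h2].
  by rewrite fin_numElt (lt_le_trans _ h1) ?ltNyr // (le_lt_trans h2) ?ltry.
have JF x : Om x -> F x = (J_of Om c nu psi x)%:E.
  by move=> Ox; rewrite /J_of fineK //; exact: Ffin.
have Jpos x : Om x -> 0 < J_of Om c nu psi x.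
  move=> Ox; have /andP[h1 _] := Fb x Ox; rewrite JF // lee_fin in h1.
  by apply: lt_le_trans h1; exact: expR_gt0.
have Jrat x x' : Om x -> Om x' ->
    J_of Om c nu psi x <= expR (2 * C) * J_of Om c nu psi x'.
  move=> Ox Ox'; rewrite -lee_fin EFinM -JF // -JF //.
  have S := @int_scale _ _ _ nu Om (expR (2*C)) (fun y => (expR (psi y - c x' y))%:E) (expR_gt0 _) (fun y _ => expR_ge0 _).
  rewrite /F; apply: le_trans S.
  apply: le_int_nm => [y _|y Oy]; first by rewrite lee_fin expR_ge0.
  rewrite -EFinM lee_fin -expRD ler_expR.
  have := hc x y Ox Oy; have := hc x' y Ox' Oy.
  rewrite !ler_norml => /andP[? ?] /andP[? ?]; lra.
have Lrat x x' : Om x -> Om x' ->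
    ln (J_of Om c nu psi x) <= 2 * C + ln (J_of Om c nu psi x').
  by move=> Ox Ox'; apply: ln_shift; [exact: Jpos|exact: Jpos|exact: Jrat].
move=> x Ox; rewrite /phi_next /lambda_of.
have h : ln (J_of Om c nu psi x) - 2 * C <=
    fine (\int[mustar]_(x in Om) (ln (J_of Om c nu psi x))%:E) <=
    ln (J_of Om c nu psi x) + 2 * C.
  apply: (@int_bounds _ _ _ mustar Om mOm) => // x' Ox'.
  have := Lrat x x' Ox Ox'; have := Lrat x' x Ox' Ox.
  move=> ? ?; apply/andP; split; lra.
move: h => /andP[? ?]; rewrite ler_norml; apply/andP; split; lra.
Qed.
End Main.

Theorem mainTheorem1 (R : realType) (d : nat) (Om : set (d.-tuple R))
  (c : d.-tuple R -> d.-tuple R -> R)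
  (mustar nustar : probability (d.-tuple R) R)
  (muk nuk : nat -> probability (d.-tuple R) R) :
  bounded_domain Om ->
  measurable Om ->
  measurable_fun (Om `*` Om) (fun z : d.-tuple R * d.-tuple R => c z.1 z.2) ->
  (supnorm (Om `*` Om) (fun z : d.-tuple R * d.-tuple R => c z.1 z.2) < +oo)%E ->
  mustar Om = 1%E -> nustar Om = 1%E ->
  (forall k, muk k Om = 1%E) -> (forall k, nuk k Om = 1%E) ->
  forall k : nat,
    (supnorm Om (phibar Om c mustar (fun n => muk n) (fun n => nuk n) k)
       <= 2%:E * supnorm (Om `*` Om) (fun z => c z.1 z.2))%E /\
    (supnorm Om (psibar Om c mustar (fun n => muk n) (fun n => nuk n) k)
       <= 3%:E * supnorm (Om `*` Om) (fun z => c z.1 z.2))%E.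
Proof.
move=> [[_ [x0 Ox0 _]] _] mOm _ Sfin ms1 _ mu1 nu1.
set S := supnorm _ _.
have Sub x y : Om x -> Om y -> ((`|c x y|)%:E <= S)%E.
  move=> Ox Oy; apply: ereal_sup_ubound; exists (x, y) => //.
have S0 : (0 <= S)%E by apply: le_trans (Sub x0 x0 Ox0 Ox0); rewrite lee_fin.
have Sf : S \is a fin_num by rewrite ge0_fin_numE.
set C := fine S.
have SC : S = C%:E by rewrite /C fineK.
have C0 : 0 <= C by rewrite -lee_fin -SC.
have hc x y : Om x -> Om y -> `|c x y| <= C.
  by move=> Ox Oy; rewrite -lee_fin -SC; exact: Sub.
have Hphi : forall k x, Om x ->
    `|phibar Om c mustar (fun n => muk n) (fun n => nuk n) k x| <= 2 * C.
  elim=> [|k IH] x Ox; first by rewrite /= normr0 mulr_ge0.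
  have H1 := (psi_bound _ _ _ mOm hc _ _ (mu1 k) IH).
  have H2 := (phi_bound _ _ _ mOm hc _ _ _ ms1 (nu1 k) H1 x Ox).
  exact H2.
move=> k; rewrite SC -!EFinM; split; apply: ge_ereal_sup => _ [x Ox <-];
  rewrite lee_fin.
  exact: Hphi.
exact: (psi_bound _ _ _ mOm hc _ _ (mu1 k) (Hphi k)).
Qed.
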